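(* Let $\mathbb{F}\in\{\mathbb{R},\mathbb{C}\}$, $N\ge 2$, and let $\mathcal{E}(M,N)=\{\{\varphi_i\}_{i=1}^M\subseteq\mathbb{F}^N:\|\varphi_i\|=\sqrt{N/M}\text{ for all }i\}$. Suppose an equiangular Parseval frame for $\mathbb{F}^N$ with $M$ vectors exists. Then $\Phi\in\mathcal{E}(M,N)$ maximizes $NE_2$ over $\mathcal{E}(M,N)$ if and only if $\Phi$ is an equiangular Parseval frame.
   Context: $\Phi$ also denotes the $N\times M$ matrix with columns $\varphi_i$. A Parseval frame satisfies $\Phi\Phi^*=I$; it is equiangular if all $\|\varphi_i\|$ are equal and all $|\langle\varphi_i,\varphi_j\rangle|$, $i\ne j$, are equal. For $K\subseteq[M]$, $\Phi_K$ is the submatrix of columns indexed by $K$. The nuclear norm $\|F\|_*$ is the sum of the singular values of $F$, and $NE_k(\Phi)=\sum_{|K|=k}\|\Phi_K\|_*$. *)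

(* Defs.v *)
From HB Require Import structures.
From mathcomp Require Import all_boot all_order all_algebra.
From mathcomp Require Import complex.
From mathcomp Require Import reals.
Set Implicit Arguments. Unset Strict Implicit. Unset Printing Implicit Defensive.
Import Order.TTheory GRing.Theory Num.Theory.
Local Open Scope ring_scope.

Section Defs.
Variable C : numClosedFieldType.

Definition adjmx m n (A : 'M[C]_(m, n)) : 'M[C]_(n, m) := (map_mx Num.conj A)^T.

Definition eigenvalues k (A : 'M[C]_k) : seq C :=
  sval (closed_field_poly_normal (char_poly A)).

Definition singular_values n k (F : 'M[C]_(n, k)) : seq C :=
  [seq sqrtC x | x <- eigenvalues (adjmx F *m F)].

Definition nuclear_norm n k (F : 'M[C]_(n, k)) : C :=
  \sum_(s <- singular_values F) s.

Definition colsubset n M (Phi : 'M[C]_(n, M)) (K : {set 'I_M}) : 'M[C]_(n, #|K|) :=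
  colsub (fun j : 'I_#|K| => enum_val j) Phi.

Definition NE n M (k : nat) (Phi : 'M[C]_(n, M)) : C :=
  \sum_(K : {set 'I_M} | #|K| == k) nuclear_norm (colsubset Phi K).

Definition inner_col n M (Phi : 'M[C]_(n, M)) (i j : 'I_M) : C :=
  \sum_k Phi k i * Num.conj (Phi k j).

Definition norm_col n M (Phi : 'M[C]_(n, M)) (i : 'I_M) : C :=
  sqrtC (\sum_k `|Phi k i| ^+ 2).

Definition parseval n M (Phi : 'M[C]_(n, M)) : Prop := Phi *m adjmx Phi = 1%:M.

Definition equiangular n M (Phi : 'M[C]_(n, M)) : Prop :=
  (forall i j, norm_col Phi i = norm_col Phi j) /\
  (forall i j i' j', i != j -> i' != j' ->
     `|inner_col Phi i j| = `|inner_col Phi i' j'|).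

(* the scalar field F: F = R (realF = true, entries real) or F = C *)
Definition in_field (realF : bool) (x : C) : bool :=
  if realF then x \is Num.real else true.

Definition over_field (realF : bool) n M (Phi : 'M[C]_(n, M)) : Prop :=
  forall k i, in_field realF (Phi k i).

Definition calE (realF : bool) n M (Phi : 'M[C]_(n, M)) : Prop :=
  over_field realF Phi /\ forall i, norm_col Phi i = sqrtC (n%:R / M%:R).

End Defs.

(* Main.v *)
Require Import Defs.
From HB Require Import structures.
From mathcomp Require Import all_boot all_order all_algebra.
From mathcomp Require Import complex.
From mathcomp Require Import reals.
From mathcomp Require Import ring lra.
Import Order.TTheory GRing.Theory Num.Theory.
Local Open Scope ring_scope.


Lemma coef_quad {C : comNzRingType} (a b : C) :
  (('X - a%:P) * ('X - b%:P))`_1 = - (a + b) /\ (('X - a%:P) * ('X - b%:P))`_0 = a * b.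
Proof. by rewrite !mulrBl !mulrBr !coefE /=; split; ring. Qed.

Lemma adjmxE {C : numClosedFieldType} n k (F : 'M[C]_(n,k)) p q :
  (adjmx F *m F) p q = inner_col F q p.
Proof.
rewrite !mxE /inner_col; apply: eq_bigr => i _; rewrite !mxE mulrC //.
Qed.

Lemma inner_colC {C : numClosedFieldType} n k (F : 'M[C]_(n,k)) p q :
  inner_col F q p = (inner_col F p q)^*.
Proof.
rewrite /inner_col rmorph_sum; apply: eq_bigr => i _.
by rewrite rmorphM /= conjCK mulrC.
Qed.

Lemma det2 (C : comNzRingType) (B : 'M[C]_2) :
  \det B = B 0 0 * B 1 1 - B 0 1 * B 1 0.
Proof.
rewrite (expand_det_row _ 0) !big_ord_recl big_ord0 /cofactor !det_mx11 !mxE /=.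
have -> : lift (0 : 'I_2) (0 : 'I_1) = 1 by apply: val_inj.
have -> : lift (1 : 'I_2) (0 : 'I_1) = 0 by apply: val_inj.
have -> : (ord0 : 'I_2) = 0 by apply: val_inj.
rewrite /bump /= expr0 expr1; ring.
Qed.

Lemma nuc2 {C : numClosedFieldType} n k (F : 'M[C]_(n,k)) (A T : C) :
  k = 2%N -> (forall p, inner_col F p p = A) ->
  (forall p q, p != q -> `|inner_col F p q| = T) ->
  nuclear_norm F = sqrtC (A + T) + sqrtC (A - T).
Proof.
move=> ek; subst k => hA hT.
set G := adjmx F *m F.
have trG : \tr G = A + A.
  by rewrite /mxtrace !big_ord_recl big_ord0 !adjmxE !hA addr0.
have detG : \det G = A * A - T ^+ 2.
  by rewrite det2 !adjmxE !hA [inner_col F 1 0]inner_colC -normCKC (hT 0 1).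
rewrite /nuclear_norm /singular_values /eigenvalues.
case: closed_field_poly_normal => rs /=.
rewrite (monicP (char_poly_monic G)) scale1r => Hrs.
have := size_char_poly G; rewrite Hrs size_prod_XsubC.
case: rs Hrs => [|r1 [|r2 [|]]] //= Hrs _.
move: Hrs; rewrite !big_cons big_nil mulr1 => Hrs.
have [h1 h0] := coef_quad r1 r2.
have := char_poly_trace G (isT : (0 < 2)%N); rewrite Hrs h1 trG => e1.
have := char_poly_det G; rewrite Hrs h0 detG expr2 mulrNN mulr1 => e0.
have s12 : r1 + r2 = A + A by apply: oppr_inj.
have p12 : r1 * r2 = A * A - T ^+ 2 by rewrite e0 mul1r.
have : (r1 - (A + T)) * (r1 - (A - T)) = 0.
  have -> : (r1 - (A + T)) * (r1 - (A - T)) = r1 * r1 - (A + A) * r1 + (A * A - T ^+ 2) by ring.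
  rewrite -s12 -p12; ring.
rewrite big_nil addr0; move/eqP; rewrite mulf_eq0 !subr_eq0 => /orP [] /eqP h.
  have -> : r2 = A - T.
    by apply: (addrI r1); rewrite s12 h; ring.
  by rewrite h.
have -> : r2 = A + T.
  by apply: (addrI r1); rewrite s12 h; ring.
by rewrite h addrC.
Qed.
Lemma sum_pairs (V : nmodType) M (W : {set 'I_M} -> V) :
  \sum_(p : 'I_M * 'I_M | p.1 != p.2) W [set p.1; p.2] =
  (\sum_(K : {set 'I_M} | #|K| == 2) W K) *+ 2.
Proof.
rewrite (partition_big (fun p => [set p.1; p.2]) (fun K : {set 'I_M} => #|K| == 2)) /=;
  last by move=> p hp; rewrite cards2 hp.
rewrite -sumrMnl; apply: eq_bigr => K /cards2P [x [y [xy ->]]].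
rewrite (eq_bigr (fun=> W [set x; y])); last by move=> p /andP [_ /eqP ->].
rewrite sumr_const.
rewrite (eq_card (B := pred2 (x, y) (y, x))) ?card2 ?xpair_eqE ?(negbTE xy) //.
case=> i j; rewrite !inE /= !xpair_eqE.
apply/idP/idP.
  move=> /andP [ij /eqP e].
  have : i \in [set x; y] by rewrite -e set21.
  have : j \in [set x; y] by rewrite -e set22.
  rewrite !in_set2 => /orP [] /eqP ej /orP [] /eqP ei; subst i j;
    rewrite /= ?eqxx in ij *; rewrite ?eqxx ?andbT ?orbT //.
rewrite unfold_in /=.
case/orP => /andP [/eqP -> /eqP ->]; first by rewrite xy eqxx.
by rewrite eq_sym xy setUC eqxx.
Qed.
Lemma core_ineq {R : realFieldType} {x y W Ws : R} :
  0 <= x -> 0 < y -> 0 <= W -> 0 < Ws -> (W - Ws) * 2 = x ^+ 2 - y ^+ 2 ->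
  0 <= 2 * Ws * y ^+ 2 - 2 * Ws * y * x - Ws ^+ 2 + W ^+ 2 /\
  (2 * Ws * y ^+ 2 - 2 * Ws * y * x - Ws ^+ 2 + W ^+ 2 = 0 -> x = y).
Proof.
move=> x0 y0 W0 Ws0 e.
have eW : W = Ws + (x ^+ 2 - y ^+ 2) / 2.
  by rewrite -e; field; rewrite ?pnatr_eq0.
have iden : (2 * Ws * y ^+ 2 - 2 * Ws * y * x - Ws ^+ 2 + W ^+ 2) * 2 =
   (y - x) * (4 * Ws * y - (x + y) * (W + Ws)).
  by rewrite eW; field; rewrite ?pnatr_eq0.
have [xy|yx] := boolP (x <= y).
  have WW : W <= Ws by nra.
  have h : 0 <= 4 * Ws * y - (x + y) * (W + Ws) by nra.
  have h3 : 0 <= y - x by lra.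
  split.
    by rewrite -(pmulr_rge0 _ (ltr0Sn _ 1)) mulrC iden; exact: mulr_ge0.
  move=> D0; have := iden; rewrite D0 mul0r => /esym/eqP; rewrite mulf_eq0 => /orP [/eqP h1|/eqP h2].
    by lra.
  have [//|xy'] := eqVneq x y.
  have xlt : x < y by rewrite lt_neqAle xy' xy.
  have WW' : W < Ws by nra.
  have : (x + y) * (W + Ws) < 4 * Ws * y by nra.
  by lra.
have {}yx : y < x by rewrite ltNge.
have WW : Ws < W by nra.
have h : 4 * Ws * y - (x + y) * (W + Ws) < 0 by nra.
split.
  rewrite -(pmulr_rge0 _ (ltr0Sn _ 1)) mulrC iden; nra.
move=> D0; have := iden; rewrite D0 mul0r => /esym/eqP; rewrite mulf_eq0 => /orP [/eqP h1|/eqP h2].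
  by lra.
by lra.
Qed.

Definition fR {R : rcfType} (a t : R) := Num.sqrt (a + t) + Num.sqrt (a - t).

Lemma tangent (R : rcfType) (a s t : R) : 0 < a -> 0 <= s -> s < a ^+ 2 -> 0 <= t -> t <= a ->
  let y := fR a (Num.sqrt s) in
  let lam := (2 * (Num.sqrt (a + Num.sqrt s) * Num.sqrt (a - Num.sqrt s)) * y)^-1 in
  0 < lam /\ fR a t <= y - lam * (t ^+ 2 - s) /\
  (fR a t = y - lam * (t ^+ 2 - s) -> t = Num.sqrt s).
Proof.
move=> a0 s0 sa t0 ta y lam.
set ts := Num.sqrt s.
have ts0 : 0 <= ts by rewrite sqrtr_ge0.
have tsa : ts < a.
  by rewrite /ts -(ger0_norm (ltW a0)) -sqrtr_sqr ltr_sqrt ?exprn_gt0.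
have tss : ts ^+ 2 = s by rewrite sqr_sqrtr.
set us := Num.sqrt (a + ts); set vs := Num.sqrt (a - ts).
set u := Num.sqrt (a + t); set v := Num.sqrt (a - t).
have us2 : us ^+ 2 = a + ts by rewrite sqr_sqrtr //; lra.
have vs2 : vs ^+ 2 = a - ts by rewrite sqr_sqrtr //; lra.
have u2 : u ^+ 2 = a + t by rewrite sqr_sqrtr //; lra.
have v2 : v ^+ 2 = a - t by rewrite sqr_sqrtr //; lra.
have us0 : 0 < us by rewrite sqrtr_gt0; lra.
have vs0 : 0 < vs by rewrite sqrtr_gt0; lra.
have u0 : 0 <= u by rewrite sqrtr_ge0.
have v0 : 0 <= v by rewrite sqrtr_ge0.
set Ws := us * vs; set W := u * v.
have Ws0 : 0 < Ws by rewrite mulr_gt0.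
have W0 : 0 <= W by rewrite mulr_ge0.
have ey : y = us + vs by [].
have ex : fR a t = u + v by [].
have y0 : 0 < y by rewrite ey; lra.
have x0 : 0 <= fR a t by rewrite ex; lra.
have eWW : (W - Ws) * 2 = (fR a t) ^+ 2 - y ^+ 2.
  rewrite ex ey /W /Ws.
  have -> : (u + v) ^+ 2 = u ^+ 2 + v ^+ 2 + 2 * (u * v) by ring.
  have -> : (us + vs) ^+ 2 = us ^+ 2 + vs ^+ 2 + 2 * (us * vs) by ring.
  rewrite u2 v2 us2 vs2; ring.
have ets : t ^+ 2 - s = Ws ^+ 2 - W ^+ 2.
  rewrite /W /Ws !exprMn u2 v2 us2 vs2 -tss; ring.
have [D0 Deq] := core_ineq x0 y0 W0 Ws0 eWW.
have K0 : 0 < 2 * Ws * y by rewrite !mulr_gt0.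
have lam0 : 0 < lam by rewrite /lam invr_gt0.
have lamK : lam * (2 * Ws * y) = 1 by rewrite /lam mulVf // gt_eqF.
split => //; split.
  rewrite -(ler_pM2r K0) mulrBl [lam * _ * _]mulrAC lamK mul1r ets -subr_ge0.
  suff -> : y * (2 * Ws * y) - (Ws ^+ 2 - W ^+ 2) - fR a t * (2 * Ws * y) =
    2 * Ws * y ^+ 2 - 2 * Ws * y * fR a t - Ws ^+ 2 + W ^+ 2 by [].
  ring.
move=> e.
have : 2 * Ws * y ^+ 2 - 2 * Ws * y * fR a t - Ws ^+ 2 + W ^+ 2 = 0.
  have : fR a t * (2 * Ws * y) = (y - lam * (t ^+ 2 - s)) * (2 * Ws * y) by rewrite e.
  rewrite mulrBl [lam * _ * _]mulrAC lamK mul1r ets => e2.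
  have -> : 2 * Ws * y ^+ 2 = y * (2 * Ws * y) by ring.
  rewrite -[2 * Ws * y * fR a t]mulrC e2; ring.
move/Deq => xy.
have : W ^+ 2 = Ws ^+ 2.
  have : (W - Ws) * 2 = 0 by rewrite eWW xy subrr.
  move/eqP; rewrite mulf_eq0 pnatr_eq0 orbF subr_eq0 => /eqP -> //.
rewrite /W /Ws !exprMn u2 v2 us2 vs2 => e3.
have : t ^+ 2 = ts ^+ 2 by nra.
move/eqP; rewrite eqf_sqr => /orP [/eqP //|/eqP h]; lra.
Qed.
Lemma CS (C : numClosedFieldType) n m (F : 'M[C]_(n,m)) i j (a : C) :
  0 < a -> inner_col F i i = a -> inner_col F j j = a -> `|inner_col F i j| <= a.
Proof.
move=> a0 hi hj; set c := inner_col F i j.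
have ac : a^* = a by rewrite geC0_conj // ltW.
have e : \sum_k `|a * F k i - c * F k j| ^+ 2 = a * (a ^+ 2 - `|c| ^+ 2).
  under eq_bigr do rewrite normCK rmorphB !rmorphM /= ac.
  rewrite (eq_bigr (fun k => a * a * (F k i * (F k i)^*) - a * c^* * (F k i * (F k j)^*)
      - a * c * (F k j * (F k i)^*) + c * c^* * (F k j * (F k j)^*))); last by move=> k _; ring.
  rewrite !big_split /= !sumrN -!mulr_sumr.
  have -> : \sum_k F k i * (F k i)^* = a by [].
  have -> : \sum_k F k j * (F k j)^* = a by [].
  have -> : \sum_k F k i * (F k j)^* = c by [].
  have -> : \sum_k F k j * (F k i)^* = c^* by rewrite -inner_colC.
  rewrite normCK; ring.
have : 0 <= a * (a ^+ 2 - `|c| ^+ 2) by rewrite -e sumr_ge0 // => k _; rewrite exprn_ge0.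
rewrite pmulr_rge0 // subr_ge0 => h.
by rewrite -(ler_pXn2r (isT : (0 < 2)%N)) ?nnegrE ?normr_ge0 ?(ltW a0).
Qed.
Lemma adjmx_entry {C : numClosedFieldType} m n (A : 'M[C]_(m,n)) i j :
  adjmx A i j = (A j i)^*.
Proof. by rewrite !mxE. Qed.

Lemma adjmx_mul {C : numClosedFieldType} m n p (A : 'M[C]_(m,n)) (B : 'M[C]_(n,p)) :
  adjmx (A *m B) = adjmx B *m adjmx A.
Proof. by rewrite /adjmx map_mxM trmx_mul. Qed.

Lemma adjmxK {C : numClosedFieldType} m n (A : 'M[C]_(m,n)) : adjmx (adjmx A) = A.
Proof. by apply/matrixP => i j; rewrite !mxE conjCK. Qed.

Lemma adjmxB {C : numClosedFieldType} m n (A B : 'M[C]_(m,n)) :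
  adjmx (A - B) = adjmx A - adjmx B.
Proof. by apply/matrixP => i j; rewrite !mxE rmorphB. Qed.

Lemma adjmx1 {C : numClosedFieldType} n : adjmx (1%:M : 'M[C]_n) = 1%:M.
Proof. by apply/matrixP => i j; rewrite !mxE eq_sym conjC_nat. Qed.

Lemma frob {C : numClosedFieldType} m n (A : 'M[C]_(m,n)) :
  \tr (A *m adjmx A) = \sum_i \sum_j `|A i j| ^+ 2.
Proof.
rewrite /mxtrace; apply: eq_bigr => i _; rewrite mxE; apply: eq_bigr => j _.
by rewrite adjmx_entry normCK.
Qed.

Lemma frob_ge0 {C : numClosedFieldType} m n (A : 'M[C]_(m,n)) :
  0 <= \tr (A *m adjmx A).
Proof. by rewrite frob; do 2!(apply: sumr_ge0 => ? _); rewrite exprn_ge0. Qed.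

Lemma frob_eq0 {C : numClosedFieldType} m n (A : 'M[C]_(m,n)) :
  \tr (A *m adjmx A) = 0 -> A = 0.
Proof.
rewrite frob => h0.
have h1 := psumr_eq0P (fun i _ => sumr_ge0 _ (fun j _ => exprn_ge0 2 (normr_ge0 (A i j)))) h0.
apply/matrixP => i j; rewrite mxE.
have h2 := psumr_eq0P (fun j _ => exprn_ge0 2 (normr_ge0 (A i j))) (h1 i isT).
by have /eqP := h2 j isT; rewrite expf_eq0 /= normr_eq0 => /eqP.
Qed.


Lemma FP_id {C : numClosedFieldType} n m (Phi : 'M[C]_(n,m)) :
  \sum_i \sum_j `|inner_col Phi i j| ^+ 2 =
  \tr ((Phi *m adjmx Phi) *m (Phi *m adjmx Phi)).
Proof.
set G := adjmx Phi *m Phi.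
have hG : adjmx G = G by rewrite /G adjmx_mul adjmxK.
transitivity (\sum_i \sum_j `|G i j| ^+ 2).
  rewrite exchange_big /=; apply: eq_bigr => i _; apply: eq_bigr => j _.
  by rewrite adjmxE.
rewrite -frob hG /G !mulmxA mxtrace_mulC !mulmxA //.
Qed.

Lemma E_id {C : numClosedFieldType} n m (Phi : 'M[C]_(n,m)) :
  let S := Phi *m adjmx Phi in
  \tr ((S - 1%:M) *m adjmx (S - 1%:M)) = \tr (S *m S) - \tr S *+ 2 + n%:R.
Proof.
move=> S.
have hS : adjmx S = S by rewrite /S adjmx_mul adjmxK.
rewrite adjmxB hS adjmx1 mulmxBl !mulmxBr mul1mx mulmx1 !raddfB /= mulmx1 mxtrace1.
rewrite mulr2n; ring.
Qed.

Lemma trS {C : numClosedFieldType} n m (Phi : 'M[C]_(n,m)) :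
  \tr (Phi *m adjmx Phi) = \sum_i inner_col Phi i i.
Proof.
by rewrite mxtrace_mulC /mxtrace; apply: eq_bigr => i _; rewrite adjmxE.
Qed.


Lemma inner_colsub {C : numClosedFieldType} n M (Phi : 'M[C]_(n,M)) K p q :
  inner_col (colsubset Phi K) p q = inner_col Phi (enum_val p) (enum_val q).
Proof. by rewrite /inner_col /colsubset; apply: eq_bigr => k _; rewrite !mxE. Qed.

Lemma pair_nuc {C : numClosedFieldType} n M (Phi : 'M[C]_(n,M)) (a : C) i j :
  i != j -> (forall l, inner_col Phi l l = a) ->
  nuclear_norm (colsubset Phi [set i; j]) =
  sqrtC (a + `|inner_col Phi i j|) + sqrtC (a - `|inner_col Phi i j|).
Proof.
move=> ij ha; apply: nuc2.
- by rewrite cards2 ij.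
- by move=> p; rewrite inner_colsub.
move=> p q pq; rewrite inner_colsub.
have hp := enum_valP p; have hq := enum_valP q.
have nq : enum_val p != enum_val q.
  by apply: contra pq => /eqP /enum_val_inj ->.
move: hp hq nq; rewrite !in_set2.
move=> /orP [] /eqP -> /orP [] /eqP -> //; rewrite ?eqxx //.
by rewrite inner_colC norm_conjC.
Qed.

Lemma diag_split {V : nmodType} M (f : 'I_M -> 'I_M -> V) :
  \sum_i \sum_j f i j = \sum_i f i i + \sum_(p : 'I_M * 'I_M | p.1 != p.2) f p.1 p.2.
Proof.
rewrite -(pair_big_dep xpredT (fun i j => i != j)) -big_split /=.
apply: eq_bigr => i _; rewrite (bigD1 i) //=; congr (_ + _).
by apply: eq_bigl => j; rewrite eq_sym.
Qed.

Lemma card_pairs M : #|[pred p : 'I_M * 'I_M | p.1 != p.2]| = (M * M.-1)%N.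
Proof.
have h2 : \sum_(p : 'I_M * 'I_M | p.1 != p.2) 1%N = #|[pred p : 'I_M * 'I_M | p.1 != p.2]|.
  by rewrite sum1_card.
have := @diag_split nat M (fun _ _ => 1%N).
rewrite h2 (eq_bigr (fun=> M)); last by move=> i _; rewrite sum_nat_const card_ord muln1.
rewrite !sum_nat_const card_ord !muln1 => h.
by rewrite -subn1 mulnBr muln1 h addKn.
Qed.

Lemma sumt_lemma {C : numClosedFieldType} n M (Phi : 'M[C]_(n,M)) (a : C) :
  (forall i, inner_col Phi i i = a) ->
  \sum_(p : 'I_M * 'I_M | p.1 != p.2) `|inner_col Phi p.1 p.2| ^+ 2 =
  \tr ((Phi *m adjmx Phi) *m (Phi *m adjmx Phi)) - `|a| ^+ 2 *+ M.
Proof.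
move=> ha; have h : \sum_i `|inner_col Phi i i| ^+ 2 = `|a| ^+ 2 *+ M.
  by rewrite (eq_bigr (fun=> `|a| ^+ 2)) ?sumr_const ?card_ord // => i _; rewrite ha.
by rewrite -FP_id diag_split h [X in X - _]addrC addrK.
Qed.

Lemma E_lemma {C : numClosedFieldType} n M (Phi : 'M[C]_(n,M)) (a : C) :
  (forall i, inner_col Phi i i = a) -> a *+ M = n%:R ->
  \tr ((Phi *m adjmx Phi - 1%:M) *m adjmx (Phi *m adjmx Phi - 1%:M)) =
  \sum_(p : 'I_M * 'I_M | p.1 != p.2) `|inner_col Phi p.1 p.2| ^+ 2 + `|a| ^+ 2 *+ M - n%:R.
Proof.
move=> ha haM; rewrite E_id (@sumt_lemma _ _ _ _ _ ha) trS (eq_bigr (fun=> a)) // sumr_const card_ord haM.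
rewrite mulr2n; ring.
Qed.

Lemma sqrtC_R {R : realType} (x : R) : 0 <= x -> sqrtC (real_complex R x) = real_complex R (Num.sqrt x).
Proof. by move=> x0; rewrite -{1}(sqr_sqrtr x0) rmorphXn sqrCK // ler0c sqrtr_ge0. Qed.

Lemma normRC {R : realType} (z : R[i]) : `|z| = real_complex R (complex.Re `|z|).
Proof. by rewrite RRe_real // normr_real. Qed.

Lemma core (R : realType) (N M : nat) (Phi : 'M[R[i]]_(N, M)) :
  (2 <= N)%N -> (N <= M)%N ->
  (forall i, inner_col Phi i i = N%:R / M%:R) ->
  let ar : R := N%:R / M%:R in
  let s : R := (N%:R - M%:R * ar ^+ 2) / (M * M.-1)%:R in
  let Bnd : R := (M * M.-1)%:R * fR ar (Num.sqrt s) in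
  [/\ NE 2 Phi *+ 2 <= real_complex R Bnd,
      NE 2 Phi *+ 2 = real_complex R Bnd -> parseval Phi /\
        forall p : 'I_M * 'I_M, p.1 != p.2 ->
          `|inner_col Phi p.1 p.2| = real_complex R (Num.sqrt s)
    & parseval Phi ->
      (forall p q : 'I_M * 'I_M, p.1 != p.2 -> q.1 != q.2 ->
         `|inner_col Phi p.1 p.2| = `|inner_col Phi q.1 q.2|) ->
      NE 2 Phi *+ 2 = real_complex R Bnd].
Proof.
move=> N2 NM ha ar s Bnd.
have arE : ar = N%:R / M%:R by [].
have sE : s = (N%:R - M%:R * ar ^+ 2) / (M * M.-1)%:R by [].
have BndE : Bnd = (M * M.-1)%:R * fR ar (Num.sqrt s) by [].
clearbody Bnd s ar.
have M2 : (2 <= M)%N by apply: leq_trans NM.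
have M0 : (0 < M)%N by apply: leq_trans M2.
have Mr0 : (0 : R) < M%:R by rewrite ltr0n.
have Nr2 : (2 : R) <= N%:R by rewrite ler_nat.
have NMr : (N%:R : R) <= M%:R by rewrite ler_nat.
have aE : (N%:R / M%:R : R[i]) = real_complex R ar.
  by rewrite arE fmorph_div /= !rmorph_nat.
have ar0 : 0 < ar by rewrite arE divr_gt0 // ltr0n; apply: leq_trans N2.
set tau := fun p : 'I_M * 'I_M => complex.Re `|inner_col Phi p.1 p.2|.
have tE p : `|inner_col Phi p.1 p.2| = real_complex R (tau p) by rewrite normRC.
have t0 p : 0 <= tau p by rewrite -ler0c -tE.
have ta p : tau p <= ar.
  by rewrite -lecR -tE -aE; apply: CS; rewrite ?ha ?aE ?ltcR.
have NEE : NE 2 Phi *+ 2 = real_complex R (\sum_(p : 'I_M * 'I_M | p.1 != p.2) fR ar (tau p)).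
  rewrite /NE -sum_pairs rmorph_sum; apply: eq_bigr => q hq.
  rewrite (@pair_nuc _ _ _ Phi _ _ _ hq ha) tE aE -rmorphD -rmorphB !sqrtC_R /fR ?rmorphD //; try (have := ta q; have := t0 q; lra).
set S := Phi *m adjmx Phi.
set E := \tr ((S - 1%:M) *m adjmx (S - 1%:M)).
set Er : R := \sum_(p : 'I_M * 'I_M | p.1 != p.2) tau p ^+ 2 + M%:R * ar ^+ 2 - N%:R.
have Mne0 : (M%:R : R[i]) != 0 by rewrite pnatr_eq0 -lt0n.
have haM : (N%:R / M%:R : R[i]) *+ M = N%:R by rewrite -[_ *+ M]mulr_natr divfK.
have EE : E = real_complex R Er.
  have h1 : `|N%:R / M%:R : R[i]| ^+ 2 *+ M = real_complex R (M%:R * ar ^+ 2).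
    rewrite aE ger0_norm; last by rewrite ler0c ltW.
    by rewrite rmorphM rmorph_nat rmorphXn mulr_natl.
  have h2 : \sum_(p : 'I_M * 'I_M | p.1 != p.2) `|inner_col Phi p.1 p.2| ^+ 2 =
      real_complex R (\sum_(p : 'I_M * 'I_M | p.1 != p.2) tau p ^+ 2).
    by rewrite rmorph_sum; apply: eq_bigr => p _; rewrite tE rmorphXn.
  have := @E_lemma _ _ _ _ _ ha haM; rewrite -/S -/E => ->.
  by rewrite h1 h2 /Er rmorphB rmorphD rmorph_nat.
have Er0 : 0 <= Er by rewrite -ler0c -EE frob_ge0.
have Epars : parseval Phi <-> Er = 0.
  split.
    move=> hp; apply: complexI; rewrite -EE rmorph0 /E /S hp subrr mul0mx mxtrace0 //.
  move=> h0; have : E = 0 by rewrite EE h0 rmorph0.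
  by move/frob_eq0/eqP; rewrite subr_eq0 => /eqP.
set P := (M * M.-1)%N.
have P0 : (0 < P)%N by rewrite muln_gt0 M0 -ltnS prednK.
have Pr0 : (0 : R) < P%:R by rewrite ltr0n.
have hcard : #|[pred p : 'I_M * 'I_M | p.1 != p.2]| = P by rewrite card_pairs.
have PE : (P%:R : R) = M%:R * (M%:R - 1).
  by rewrite /P -subn1 natrM natrB ?M0.
have Mar : M%:R * ar ^+ 2 = N%:R ^+ 2 / M%:R.
  by rewrite arE; field; rewrite gt_eqF.
have sP : s * P%:R = N%:R - M%:R * ar ^+ 2 by rewrite sE divfK // gt_eqF.
have arM : ar * M%:R = N%:R by rewrite arE divfK // gt_eqF.
have ar2M2 : ar ^+ 2 * M%:R ^+ 2 = N%:R ^+ 2 by rewrite -arM; ring.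
have s0 : 0 <= s.
  rewrite sE divr_ge0 ?ler0n // Mar subr_ge0 ler_pdivrMr //; nra.
have sa : s < ar ^+ 2.
  rewrite sE ltr_pdivrMr // PE; nra.
set y := fR ar (Num.sqrt s).
set lam := (2 * (Num.sqrt (ar + Num.sqrt s) * Num.sqrt (ar - Num.sqrt s)) * y)^-1.
have T : forall p, [/\ 0 < lam, fR ar (tau p) <= y - lam * (tau p ^+ 2 - s) &
    (fR ar (tau p) = y - lam * (tau p ^+ 2 - s) -> tau p = Num.sqrt s)].
  by move=> p; have [h1 [h2 h3]] := @tangent _ _ _ _ ar0 s0 sa (t0 p) (ta p); split.
pose i0 : 'I_M := Ordinal M0.
pose i1 : 'I_M := Ordinal M2.
have hp0 : (i0, i1).1 != (i0, i1).2 by [].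
have [lam0 _ _] := T (i0, i1).
have ErE : Er = \sum_(p : 'I_M * 'I_M | p.1 != p.2) tau p ^+ 2 - s * P%:R.
  by rewrite sP /Er; ring.
have Ssum : \sum_(p : 'I_M * 'I_M | p.1 != p.2) (y - lam * (tau p ^+ 2 - s)) = Bnd - lam * Er.
  transitivity (\sum_(p : 'I_M * 'I_M | p.1 != p.2) ((y + lam * s) - lam * tau p ^+ 2)).
    by apply: eq_bigr => p _; ring.
  rewrite sumrB sumr_const hcard -mulr_sumr ErE BndE -/P -[(y + lam * s) *+ P]mulr_natl.
  rewrite /y; ring.
split.
- rewrite NEE lecR; apply: le_trans (_ : _ <= Bnd - lam * Er) _.
    by rewrite -Ssum; apply: ler_sum => p _; have [_ h _] := T p.
  by nra.
- move=> hE.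
  have hsum : \sum_(p : 'I_M * 'I_M | p.1 != p.2) fR ar (tau p) = Bnd.
    by apply: complexI; rewrite -NEE hE.
  have hd : \sum_(p : 'I_M * 'I_M | p.1 != p.2) (y - lam * (tau p ^+ 2 - s) - fR ar (tau p)) = - (lam * Er).
    by rewrite sumrB Ssum hsum; ring.
  have hd0 : 0 <= \sum_(p : 'I_M * 'I_M | p.1 != p.2) (y - lam * (tau p ^+ 2 - s) - fR ar (tau p)).
    by apply: sumr_ge0 => p _; rewrite subr_ge0; have [_ h _] := T p.
  have lE : lam * Er = 0 by nra.
  have Er00 : Er = 0 by move/eqP: lE; rewrite mulf_eq0 gt_eqF //= => /eqP.
  split; first by apply/Epars.
  move=> p hp.
  have hsum0 : \sum_(p : 'I_M * 'I_M | p.1 != p.2) (y - lam * (tau p ^+ 2 - s) - fR ar (tau p)) = 0.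
    by rewrite hd lE oppr0.
  have hge : forall q : 'I_M * 'I_M, q.1 != q.2 -> 0 <= y - lam * (tau q ^+ 2 - s) - fR ar (tau q).
    by move=> q _; rewrite subr_ge0; have [_ h _] := T q.
  have := psumr_eq0P hge hsum0 hp.
  have [_ _ h] := T p.
  move/eqP; rewrite subr_eq0 => /eqP /esym /h tp.
  by rewrite tE tp.
move=> hpar heq.
have Er00 := (Epars.1 hpar).
have tq : forall p : 'I_M * 'I_M, p.1 != p.2 -> tau p = tau (i0, i1).
  by move=> p hp; apply: complexI; rewrite -!tE; apply: heq.
have st : \sum_(p : 'I_M * 'I_M | p.1 != p.2) tau p ^+ 2 = tau (i0, i1) ^+ 2 * P%:R.
  by rewrite (eq_bigr (fun=> tau (i0, i1) ^+ 2)) ?sumr_const ?hcard ?mulr_natr // => p hp; rewrite tq.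
have t2 : tau (i0, i1) ^+ 2 = s.
  move: Er00; rewrite ErE st => /eqP; rewrite subr_eq0 => /eqP.
  by move/(mulIf (lt0r_neq0 Pr0)).
have ts : tau (i0, i1) = Num.sqrt s by rewrite -t2 sqrtr_sqr ger0_norm.
rewrite NEE BndE (eq_bigr (fun=> y)); last by move=> p hp; rewrite tq // ts.
by rewrite sumr_const hcard mulr_natl.
Qed.

Lemma inner_sum {C : numClosedFieldType} n M (Phi : 'M[C]_(n,M)) i :
  inner_col Phi i i = \sum_k `|Phi k i| ^+ 2.
Proof. by apply: eq_bigr => k _; rewrite normCK. Qed.

Lemma norm_inner {C : numClosedFieldType} n M (Phi : 'M[C]_(n,M)) i :
  norm_col Phi i = sqrtC (inner_col Phi i i).
Proof. by rewrite /norm_col inner_sum. Qed.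

Lemma inner_norm {C : numClosedFieldType} n M (Phi : 'M[C]_(n,M)) i :
  inner_col Phi i i = norm_col Phi i ^+ 2.
Proof. by rewrite norm_inner sqrtCK. Qed.

Lemma squeeze {C : numClosedFieldType} {x y b : C} :
  x *+ 2 <= b -> y *+ 2 = b -> y <= x -> x *+ 2 = b.
Proof.
move=> h1 h2 h3; apply: le_anti; rewrite h1 /= -h2.
by rewrite (@ler_pMn2r _ 2 isT).
Qed.

Lemma le_from2 {C : numClosedFieldType} {x y b : C} :
  x *+ 2 <= b -> y *+ 2 = b -> x <= y.
Proof. by move=> h1 h2; rewrite -(@ler_pMn2r _ 2 isT) h2. Qed.

Theorem proposition20 (R : realType) (realF : bool) (N M : nat) (hN : (2 <= N)%N)
  (hex : exists Psi : 'M[R[i]]_(N, M),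
     over_field realF Psi /\ parseval Psi /\ equiangular Psi)
  (Phi : 'M[R[i]]_(N, M)) (hPhi : calE realF Phi) :
  (forall Psi : 'M[R[i]]_(N, M), calE realF Psi -> NE 2 Psi <= NE 2 Phi)
  <-> (parseval Phi /\ equiangular Phi).
Proof.
have [Psi [hof [hpar [heqn heqi]]]] := hex.
have trN : \sum_i inner_col Psi i i = N%:R by rewrite -trS hpar mxtrace1.
have M0 : (0 < M)%N.
  case: M Psi Phi hPhi hex hof hpar heqn heqi trN => // Psi Phi _ _ _ _ _ _.
  rewrite big_ord0 => /eqP; rewrite eq_sym pnatr_eq0 => /eqP N0.
  by rewrite N0 in hN.
have Mne0 : (M%:R : R[i]) != 0 by rewrite pnatr_eq0 -lt0n.
pose i0 : 'I_M := Ordinal M0.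
have hb : forall i, inner_col Psi i i = N%:R / M%:R.
  have e : forall i, inner_col Psi i i = inner_col Psi i0 i0.
    by move=> i; rewrite !inner_norm (heqn i i0).
  have : inner_col Psi i0 i0 *+ M = N%:R.
    by rewrite -trN (eq_bigr (fun=> inner_col Psi i0 i0)) ?sumr_const ?card_ord.
  move=> h i; rewrite e; apply: (mulIf Mne0); rewrite divfK // mulr_natr //.
have PsiE : calE realF Psi.
  by split => // i; rewrite norm_inner hb.
have hPhi' : forall i, inner_col Phi i i = N%:R / M%:R.
  by move=> i; rewrite inner_norm hPhi.2 sqrtCK.
have NM : (N <= M)%N.
  have := @sumt_lemma _ _ _ Psi _ hb.
  rewrite hpar mulmx1 mxtrace1 => h.
  have : 0 <= (N%:R : R[i]) - `|N%:R / M%:R : R[i]| ^+ 2 *+ M.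
    by rewrite -h; apply: sumr_ge0 => p _; rewrite exprn_ge0.
  rewrite ger0_norm ?divr_ge0 ?ler0n // => h2.
  have e2 : (N%:R / M%:R : R[i]) ^+ 2 *+ M = N%:R ^+ 2 / M%:R by rewrite -mulr_natr; field.
  move: h2; rewrite e2 subr_ge0 ler_pdivrMr ?ltr0n // -natrX -natrM ler_nat -mulnn.
  by rewrite leq_pmul2l //; apply: leq_trans hN.
have [PhiA PhiB PhiC] := @core _ _ _ Phi hN NM hPhi'.
have [PsiA PsiB PsiC] := @core _ _ _ Psi hN NM hb.
have PsiBnd := PsiC hpar (fun p q hp hq => heqi _ _ _ _ hp hq).
split.
- move=> hmax.
  have hE := squeeze PhiA PsiBnd (hmax Psi PsiE).
  have [pp hin] := PhiB hE.
  split => //; split.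
    by move=> i j; rewrite hPhi.2 hPhi.2.
  by move=> i j i' j' hij hij'; rewrite (hin (i, j)) // (hin (i', j')).
- move=> [hpp [_ hqq]] Psi' hPsi'.
  have hP2 : forall i, inner_col Psi' i i = N%:R / M%:R.
    by move=> i; rewrite inner_norm hPsi'.2 sqrtCK.
  have [A _ _] := @core _ _ _ Psi' hN NM hP2.
  exact: le_from2 A (PhiC hpp (fun p q hp hq => hqq _ _ _ _ hp hq)).
Qed.
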